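(* Let $T$ be a skew-nontrivial tree. Then the following are equivalent: (1) $\mathrm{Z}_-(T)=1$; (2) $SD_2(T)$ is a tree; (3) $T$ is the 1-subdivision of a tree; (4) $T$ is the 1-subdivision of $SD_2(T)$.
   Context: Skew forcing: vertices are colored blue or white; if any vertex $u$ (blue or white) has exactly one white neighbor $v$, then $u$ may force $v$ to become blue; a skew forcing set is a set of initially blue vertices from which repeated forcing turns all vertices blue, and $\mathrm{Z}_-(G)$ is the minimum size of one. $B^{\emptyset}_-(T)$ is the set of vertices that become blue when the skew forcing rule is applied starting from the empty set until no more forces are possible, and $W^{\emptyset}_-(T)=V(T)\setminus B^{\emptyset}_-(T)$. The skew-nontrivial subgraph $\check G$ of $G$ is obtained by computing $B^{\emptyset}_-(G)$, then deleting each vertex of $B^{\emptyset}_-(G)$ all of whose neighbors are in $B^{\emptyset}_-(G)$, and deleting each edge with both endpoints in $B^{\emptyset}_-(G)$; $T$ is skew-nontrivial if $\check T=T$. The special distance-2 graph $SD_2(T)$ has vertex set $W^{\emptyset}_-(T)$, with $u,w$ adjacent iff $u\ne w$ and $N_T(u)\cap N_T(w)\neq\emptyset$. The 1-subdivision of a graph $H$ is obtained by inserting one new vertex on every edge of $H$. *)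

(* Defs.v *)
From mathcomp Require Import all_boot all_order.
Set Implicit Arguments. Unset Strict Implicit. Unset Printing Implicit Defensive.

Definition simple_graph (V : finType) (e : rel V) : Prop :=
  symmetric e /\ irreflexive e.

Definition is_tree (V : finType) (e : rel V) : Prop :=
  [/\ 0 < #|V|,
      (forall x y : V, connect e x y) &
      (forall c : seq V, uniq c -> 3 <= size c -> ~~ cycle e c)].

Definition graph_iso (A B : finType) (eA : rel A) (eB : rel B) : Prop :=
  exists f : A -> B, bijective f /\ forall x y, eB (f x) (f y) = eA x y.

Section Skew.
Variables (V : finType) (e : rel V).

(* one round of skew forcing: every vertex u (blue or white) with exactly
   one white neighbour v forces v *)
Definition skew_step (B : {set V}) : {set V} :=
  B :|: [set v | [exists u, [set w | e u w & w \notin B] == [set v]]].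

(* the final set of blue vertices obtained by repeated forcing from S
   (after #|V| rounds no further force is possible) *)
Definition skew_closure (S : {set V}) : {set V} := iter #|V| skew_step S.

Definition skew_forcing_set (S : {set V}) : bool := skew_closure S == setT.

Definition Zminus : nat :=
  \big[minn/#|V|]_(S : {set V} | skew_forcing_set S) #|S|.

Definition Bempty : {set V} := skew_closure set0.
Definition Wempty : {set V} := ~: Bempty.

(* G is skew-nontrivial: the skew-nontrivial subgraph equals G, i.e. no
   vertex of Bempty has all its neighbours in Bempty, and no edge has
   both endpoints in Bempty. *)
Definition skew_nontrivial : Prop :=
  (forall v, v \in Bempty -> ~ (forall w, e v w -> w \in Bempty)) /\
  (forall u v, e u v -> ~ (u \in Bempty /\ v \in Bempty)).

Definition SD2_vertex := {x : V | x \in Wempty}.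
Definition SD2_rel : rel SD2_vertex :=
  fun a b => (val a != val b) && [exists x, e (val a) x && e (val b) x].
End Skew.
Arguments SD2_rel {V} e.

Section Subdiv.
Variables (U : finType) (f : rel U).
Definition is_edge (S : {set U}) : bool :=
  [exists x, exists y, f x y && (S == [set x; y])].
Definition edge_type := {S : {set U} | is_edge S}.
Definition subdiv_vertex : finType := (U + edge_type)%type.
Definition subdiv_rel : rel subdiv_vertex :=
  fun a b => match a, b with
  | inl u, inr s => u \in val s
  | inr s, inl u => u \in val s
  | _, _ => false
  end.
End Subdiv.
Arguments subdiv_rel {U} f.

Definition is_subdivision_of (V : finType) (e : rel V) (U : finType) (f : rel U) : Prop :=
  graph_iso e (subdiv_rel f).

(* Main.v *)
Require Import Defs.
From mathcomp Require Import all_boot all_order zify.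
Set Implicit Arguments. Unset Strict Implicit. Unset Printing Implicit Defensive.
Module MP1.

Section Closure.
Variables (V : finType) (e : rel V).
Local Notation stp := (skew_step e).
Implicit Types (A B S : {set V}).

Definition whiteN (B : {set V}) u := [set w | e u w & w \notin B].

Lemma stepE B : stp B = B :|: [set v | [exists u, whiteN B u == [set v]]].
Proof. by []. Qed.

Lemma in_whiteN B u w : (w \in whiteN B u) = e u w && (w \notin B).
Proof. by rewrite inE. Qed.

Lemma step_ext B : B \subset stp B.
Proof. exact: subsetUl. Qed.

Lemma whiteN_anti A B u : A \subset B -> whiteN B u \subset whiteN A u.
Proof.
move=> AB; apply/subsetP=> w; rewrite !in_whiteN => /andP[-> wB] /=.
by apply: contra wB; apply: (subsetP AB).
Qed.

Lemma forced_in B u v : whiteN B u == [set v] -> v \in stp B.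
Proof. by move=> H; rewrite stepE inE; apply/orP; right; rewrite inE; apply/existsP; exists u. Qed.

Lemma step_mono A B : A \subset B -> stp A \subset stp B.
Proof.
move=> AB; apply/subsetP=> v; rewrite stepE inE => /orP[vA|].
  by apply: (subsetP (step_ext B)); rewrite (subsetP AB v vA).
rewrite inE => /existsP[u /eqP Hu].
case vB: (v \in B); first by apply: (subsetP (step_ext B)).
apply: (@forced_in _ u); rewrite eqEsubset; apply/andP; split.
  by rewrite -Hu; apply: whiteN_anti.
rewrite sub1set.
have : v \in whiteN A u by rewrite Hu set11.
by rewrite !in_whiteN => /andP[-> _]; rewrite vB.
Qed.

Lemma iter_ext S k : S \subset iter k stp S.
Proof. elim: k => [|k IH] //=; exact: subset_trans IH (step_ext _). Qed.

Lemma iter_sub S k k' : k <= k' -> iter k stp S \subset iter k' stp S.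
Proof.
move=> /subnK <-; elim: (k' - k) => [|d IH] //=.
by rewrite ?addSn /=; apply: subset_trans IH (step_ext _).
Qed.

Lemma iter_mono S S' k : S \subset S' -> iter k stp S \subset iter k stp S'.
Proof. move=> H; elim: k => [|k IH] //=; exact: step_mono. Qed.

Lemma iter_fix S k : iter k.+1 stp S = iter k stp S ->
  forall m, k <= m -> iter m stp S = iter k stp S.
Proof.
move=> Hk m /subnK <-; elim: (m - k) => [|d IH] //=.
by rewrite ?addSn /= IH.
Qed.

Lemma iter_grow S k : (forall j, j < k -> iter j.+1 stp S != iter j stp S) ->
  k <= #|iter k stp S|.
Proof.
elim: k => [|k IH] H //.
have Hk := H k (ltnSn k).
have IH' := IH (fun j hj => H j (leqW hj)).
have : iter k stp S \proper iter k.+1 stp S.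
  by rewrite properEneq eq_sym Hk step_ext.
move/proper_card => lt; exact: leq_ltn_trans IH' lt.
Qed.

Lemma closure_stable S : stp (skew_closure e S) = skew_closure e S.
Proof.
rewrite /skew_closure.
apply/eqP; apply/negPn/negP => Hne.
have H : forall j, j < #|V|.+1 -> iter j.+1 stp S != iter j stp S.
  move=> j hj; apply/negP => /eqP Hj; apply: (negP Hne); apply/eqP.
  have F := iter_fix Hj.
  change (iter #|V|.+1 stp S = iter #|V| stp S).
  by rewrite (F #|V|.+1 (ltnW hj)) (F #|V| _).
have := iter_grow H; have := max_card (iter #|V|.+1 stp S); lia.
Qed.

Lemma closure_ext S : S \subset skew_closure e S.
Proof. exact: iter_ext. Qed.

Lemma closure_mono S S' : S \subset S' -> skew_closure e S \subset skew_closure e S'.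
Proof. exact: iter_mono. Qed.

Lemma closure_not_single S u v : whiteN (skew_closure e S) u != [set v].
Proof.
apply/negP => H; have := forced_in H; rewrite closure_stable => vin.
have : v \in whiteN (skew_closure e S) u by rewrite (eqP H) set11.
by rewrite in_whiteN vin andbF.
Qed.

Lemma bigmin_le_seq (I : eqType) (s : seq I) (P : pred I) (F : I -> nat) d i0 :
  i0 \in s -> P i0 -> \big[minn/d]_(i <- s | P i) F i <= F i0.
Proof.
elim: s => //= a s IH; rewrite inE big_cons => /orP[/eqP<- Pi|i0s Pi].
  by rewrite Pi geq_minl.
case: ifP => _; last exact: IH.
exact: leq_trans (geq_minr _ _) (IH i0s Pi).
Qed.

Lemma Zminus_le S : skew_forcing_set e S -> Zminus e <= #|S|.
Proof. by move=> H; apply: bigmin_le_seq => //; rewrite mem_index_enum. Qed.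

Lemma forcing_setT : skew_forcing_set e setT.
Proof. by rewrite /skew_forcing_set eqEsubset subsetT closure_ext. Qed.

Lemma Zminus_attained : exists S, skew_forcing_set e S /\ Zminus e = #|S|.
Proof.
rewrite /Zminus; apply: (big_ind (fun m => exists S, skew_forcing_set e S /\ m = #|S|)).
- by exists setT; rewrite forcing_setT cardsT.
- move=> x y [S [HS ->]] [S' [HS' ->]]; rewrite /minn; case: ifP => _.
    by exists S. by exists S'.
- by move=> S HS; exists S.
Qed.

End Closure.
End MP1.
Import MP1.
Module MP2.

Section Forcing.
Variables (V : finType) (e : rel V) (r : V).
Hypothesis Hforce : skew_closure e [set r] = setT.
Local Notation stp := (skew_step e).
Local Notation it k := (iter k stp [set r]).
Definition Forced u v := [exists k : 'I_#|V|.+1, whiteN e (it k) u == [set v]].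

Lemma forced_aux k k' u v v' : k < k' -> whiteN e (it k) u = [set v] ->
  whiteN e (it k') u = [set v'] -> False.
Proof.
move=> lt H H'.
have vin : v \in it k'.
  apply: (subsetP (iter_sub _ _ lt)); apply: (@forced_in _ _ _ u); by rewrite H.
have sub := whiteN_anti e u (iter_sub e [set r] (ltnW lt)).
have : v' \in whiteN e (it k) u by apply: (subsetP sub); rewrite H' set11.
rewrite H inE => /eqP v'v.
have : v' \in whiteN e (it k') u by rewrite H' set11.
by rewrite in_whiteN v'v vin andbF.
Qed.

Lemma forced_uniq u v v' : Forced u v -> Forced u v' -> v = v'.
Proof.
move=> /existsP[k /eqP H] /existsP[k' /eqP H'].
case: (ltngtP k k') => [lt|lt|eq].
- by case: (forced_aux lt H H').
- by case: (forced_aux lt H' H).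
- by move: H'; rewrite -(ord_inj eq) H => /set1_inj.
Qed.

Lemma forced_edge u v : Forced u v -> e u v.
Proof.
move=> /existsP[k /eqP H].
have : v \in whiteN e (it k) u by rewrite H set11.
by rewrite in_whiteN => /andP[].
Qed.

Lemma forced_exists v : v != r -> exists u, Forced u v.
Proof.
move=> vr.
have : v \in skew_closure e [set r] by rewrite Hforce inE.
rewrite /skew_closure.
suff H : forall k, k <= #|V| -> v \in it k -> v = r \/ exists u, Forced u v.
  by case/(H _ (leqnn _)) => // vr'; rewrite vr' eqxx in vr.
elim=> [|k IH] hk.
  by rewrite /= inE => /eqP ->; left.
rewrite /= stepE inE => /orP[vin|]; first exact: IH (ltnW hk) vin.
rewrite inE => /existsP[u Hu]; right; exists u; apply/existsP.
by exists (Ordinal (ltnW hk : k < #|V|.+1)).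
Qed.

Lemma forcing_count (A Bs : {set V}) :
  (forall u v, v \in A -> e u v -> u \in Bs) -> #|A :\ r| <= #|Bs|.
Proof.
move=> H.
pose f v := odflt v [pick u | Forced u v].
have Hf : forall v, v != r -> Forced (f v) v.
  move=> v /forced_exists [u Hu]; rewrite /f; case: pickP => [u' //|/(_ u)].
  by rewrite Hu.
rewrite -(@card_in_imset _ _ f).
- apply: subset_leq_card; apply/subsetP => _ /imsetP[v vA ->].
  move: vA; rewrite !inE => /andP[vr vA].
  apply: H vA _; exact: forced_edge (Hf v vr).
- move=> v v'; rewrite !inE => /andP[vr _] /andP[v'r _] Heq.
  apply: (@forced_uniq (f v)); first exact: Hf.
  rewrite Heq; exact: Hf.
Qed.
End Forcing.
End MP2.
Import MP2.
Module MP3.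

Definition has_cycle (T : eqType) (r : rel T) :=
  exists c, [/\ uniq c, 3 <= size c & cycle r c].

Definition avoid (T : eqType) (r : rel T) p q : rel T :=
  fun a b => r a b && ~~ ((a \in [:: p; q]) && (b \in [:: p; q])).

Lemma cycle_of_avoid (T : finType) (r : rel T) p q : p != q -> r p q ->
  connect (avoid r p q) q p -> has_cycle r.
Proof.
move=> pq rpq /connectP[l pl lastE].
case: (shortenP pl) lastE => l' pl' ul' _ lastE.
exists (q :: l'); split => //.
- case: l' pl' ul' lastE => [|z [|z' l'']] //= pl' ul' lastE.
    by rewrite lastE eqxx in pq.
  move: pl'; rewrite /avoid -lastE !inE !eqxx /= orbT.
  by rewrite andbF.
- rewrite /= rcons_path -lastE rpq andbT.
  by apply: sub_path pl' => a b /andP[].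
Qed.

Lemma path_avoid (T : eqType) (r : rel T) (Q : pred T) x t u :
  Q x -> all Q t -> path r x (rcons t u) ->
  path (fun a b => r a b && (Q a || Q b)) x (rcons t u).
Proof.
elim: t x => [|y t IH] x Qx /=; first by rewrite Qx !andbT.
move=> /andP[Qy Qt] /andP[rxy pt]; rewrite rxy Qx /=.
exact: IH.
Qed.

Section Graph.
Variables (T : finType) (e : rel T).
Hypotheses (esym : symmetric e) (eirr : irreflexive e).

Lemma edge_neq x y : e x y -> x != y.
Proof. by apply: contraTneq => ->; rewrite eirr. Qed.

Lemma deg2_cycle (X : {set T}) :
  (forall x y, x \in X -> y \in X -> e x y -> exists z, [/\ e x z, z \in X & z != y]) ->
  forall x0 y0, x0 \in X -> y0 \in X -> e x0 y0 -> has_cycle e.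
Proof.
move=> H x0 y0 x0X y0X e0.
suff: forall n, has_cycle e \/ exists y z rest,
    [/\ uniq [:: y, z & rest], path e y (z :: rest),
        all (mem X) [:: y, z & rest] & size rest = n].
  case/(_ #|T|) => // [[y [z [rest [U _ _ S]]]]].
  move/card_uniqP: U => U.
  have := max_card (mem [:: y, z & rest]); rewrite U /= S. by move=> HH; rewrite ltnNge ltnW in HH.
elim=> [|n IH].
  right; exists y0, x0, [::]; split => //=.
  - by rewrite inE eq_sym edge_neq.
  - by rewrite esym e0.
  - by rewrite x0X y0X.
case: IH => [Hc|[y [z [rest [U P A S]]]]]; first by left.
move: (A) => /= /and3P[yX zX _].
move: (P) => /= /andP[eyz _].
have [y' [eyy' y'X y'z]] := H y z yX zX eyz.
case: (boolP (y' \in [:: y, z & rest])) => Hy'.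
- left.
  have y'r : y' \in rest.
    move: Hy'; rewrite !inE (negbTE y'z) /=.
    by rewrite eq_sym (negbTE (edge_neq eyy')).
  clear Hy'; case/splitPr: rest / y'r U P A S => r1 r2 U P A S.
  exists [:: y, z & r1 ++ [:: y']]; split.
  - move: U; have -> : [:: y, z & r1 ++ y' :: r2] = [:: y, z & r1 ++ [:: y']] ++ r2.
      by rewrite /= -catA.
    by rewrite cat_uniq => /andP[].
  - by rewrite /= size_cat /=; lia.
  - rewrite /cycle rcons_path; apply/andP; split.
      move: P; have -> : z :: r1 ++ y' :: r2 = (z :: r1 ++ [:: y']) ++ r2.
        by rewrite /= -catA.
      by rewrite cat_path => /andP[].
    by rewrite /= last_cat /= esym.
- right; exists y', y, (z :: rest); split => //=.
  - by rewrite /= Hy'; move: U => /= ->.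
  - by apply/andP; split; [rewrite esym | exact: P].
  - by apply/andP; split; [exact: y'X | exact: A].
  - by rewrite S.
Qed.

End Graph.
End MP3.
Import MP3.
Module MP4.

Section Count.
Variables (T : finType) (e : rel T).
Hypotheses (esym : symmetric e) (eirr : irreflexive e) (acyc : ~ has_cycle e).
Implicit Types (X A : {set T}).

Definition eX (X : {set T}) : rel T := fun x y => [&& x \in X, y \in X & e x y].
Definition Nb x := [set y | e x y].
Lemma inNb x y : (y \in Nb x) = e x y.
Proof. by rewrite inE. Qed.
Definition connectedX (X : {set T}) :=
  forall x y, x \in X -> y \in X -> connect (eX X) x y.

Lemma not_single_ex (A : {set T}) y : A != [set y] -> y \in A ->
  exists z, z \in A /\ z != y.
Proof.
move=> Ay yA; case: (boolP [exists z, (z \in A) && (z != y)]).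
  by move=> /existsP[z /andP[]]; exists z.
move=> /existsPn H; exfalso; apply: (negP Ay); apply/eqP/setP => z.
rewrite inE; apply/idP/idP => [zA|/eqP -> //].
by have := H z; rewrite zA /= negbK.
Qed.

Lemma leaf_exists X : 1 < #|X| -> connectedX X ->
  exists l m, l \in X /\ Nb l :&: X = [set m].
Proof.
move=> H2 Hc.
case: (boolP [exists l, (l \in X) && [exists m, Nb l :&: X == [set m]]]).
  by move=> /existsP[l /andP[lX /existsP[m /eqP Hm]]]; exists l, m.
move=> /existsPn Hno; exfalso; apply: acyc.
have [x [y [xX yX xy]]] := card_gt1P H2.
have /connectP[p pp lastE] := Hc x y xX yX.
case: p pp lastE => [|z p] /=; first by move=> _ E; rewrite E eqxx in xy.
move=> /andP[/and3P[_ zX exz] _] _.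
apply: (@deg2_cycle _ _ esym eirr X _ x z xX zX exz).
move=> a b aX bX eab.
have := Hno a; rewrite aX /= => /existsPn /(_ b) Hb.
have bin : b \in Nb a :&: X by rewrite !inE eab bX.
have [c [cin cb]] := not_single_ex Hb bin.
by exists c; move: cin; rewrite !inE => /andP[-> ->].
Qed.

Lemma path_restr X l x p : x != l -> l \notin p -> path (eX X) x p ->
  path (eX (X :\ l)) x p.
Proof.
elim: p x => [|y p IH] x //= xl; rewrite inE negb_or => /andP[yl lp].
move=> /andP[/and3P[xX yX exy] pp].
rewrite /eX !inE xl xX eq_sym yl yX exy /=.
by apply: IH => //; rewrite eq_sym.
Qed.

Lemma conn_remove_leaf X l m : l \in X -> Nb l :&: X = [set m] ->
  connectedX X -> connectedX (X :\ l).
Proof.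
move=> lX Hl Hc x y; rewrite !inE => /andP[xl xX] /andP[yl yX].
have /connectP[p pp lastE] := Hc x y xX yX.
case: (shortenP pp) lastE => p' pp' up' _ lastE.
apply/connectP; exists p' => //.
case: (boolP (l \in p')) => lp; last exact: path_restr.
exfalso.
move: pp' up' lastE; case/splitPr: p' / lp => p1 p2 pp' up' lastE.
case: p2 pp' up' lastE => [|z p2] pp' up' lastE.
  by move: lastE; rewrite last_cat /= => E; rewrite E eqxx in yl.
move: pp'; rewrite cat_path /= => /and3P[_ /and3P[lastX _ e1] /andP[/and3P[_ zX e2] _]].
have Hw : forall w, w \in X -> e l w -> w = m.
  by move=> w wX elw; apply/set1P; rewrite -Hl !inE elw wX.
have E : last x p1 = z.
  by rewrite (Hw z zX e2) (Hw _ lastX) // esym.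
move: up'; rewrite -cat_cons cat_uniq => /and3P[_ /hasPn H _].
have zin : z \in [:: l, z & p2] by rewrite !inE eqxx orbT.
by have := H _ zin; rewrite -E mem_last.
Qed.

Section Bip.
Variable Bs : {set T}.
Hypothesis Hbip : forall x y, e x y -> (x \in Bs) != (y \in Bs).

Lemma count_X n : forall X, #|X| = n.+1 -> connectedX X ->
  \sum_(b in Bs :&: X) #|Nb b :&: X| + 1 = #|X|.
Proof.
elim: n => [|n IH] X hX Hc.
  have /cards1P [x Xx] : #|X| == 1 by rewrite hX.
  rewrite big1 ?hX // => b; rewrite inE Xx => /andP[_ /set1P ->].
  apply/eqP; rewrite cards_eq0; apply/eqP/setP => z; rewrite !(inNb, inE).
  by case: (z =P x) => [->|]; rewrite ?eirr ?andbF.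
have h2 : 1 < #|X| by rewrite hX.
have [l [m [lX Hl]]] := leaf_exists h2 Hc.
set X' := X :\ l.
have hX' : #|X'| = n.+1.
  by have := cardsD1 l X; rewrite lX hX /= => [[]].
have HX' := IH X' hX' (conn_remove_leaf lX Hl Hc).
have : m \in Nb l :&: X by rewrite Hl set11.
rewrite !(inNb, inE) => /andP[elm mX].
have Hw : forall w, w \in X -> e l w = (w == m).
  move=> w wX; apply/idP/eqP => [elw|->//].
  by apply/set1P; rewrite -Hl !(inNb, inE) elw wX.
have FG : forall b, #|Nb b :&: X| = e b l + #|Nb b :&: X'|.
  move=> b; rewrite (cardsD1 l (Nb b :&: X)) !(inNb, inE) lX andbT; congr (_ + _).
  apply: eq_card => z; rewrite !(inNb, inE).
  by case: (z == l); case: (e b z).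
rewrite (eq_bigr _ (fun b _ => FG b)) big_split /=.
case: (boolP (l \in Bs)) => lB.
  have mB : m \notin Bs by have := Hbip elm; rewrite lB; case: (m \in Bs).
  rewrite big1 ?add0n; last first.
    move=> b; rewrite inE => /andP[bB bX]; rewrite esym Hw //.
    by case: eqP => // bm; rewrite -bm bB in mB.
  rewrite (bigD1 l) /=; last by rewrite inE lB lX.
  have Gl : #|Nb l :&: X'| = 1.
    rewrite -(cards1 m) -Hl; apply: eq_card => z; rewrite !(inNb, inE).
    by case: (z =P l) => [->|]; rewrite ?eirr.
  rewrite Gl.
  have -> : \sum_(i in Bs :&: X | i != l) #|Nb i :&: X'| =
            \sum_(i in Bs :&: X') #|Nb i :&: X'|.
    apply: eq_bigl => b; rewrite !inE.
    by case: (b \in Bs); case: (b \in X); case: (b == l).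
  lia.
have mB : m \in Bs by have := Hbip elm; rewrite (negbTE lB); case: (m \in Bs).
rewrite (bigD1 m) /=; last by rewrite inE mB mX.
rewrite big1; last first.
  move=> b; rewrite inE => /andP[/andP[bB bX] bm]; rewrite esym Hw //.
  by rewrite (negbTE bm).
have -> : \sum_(i in Bs :&: X) #|Nb i :&: X'| =
          \sum_(i in Bs :&: X') #|Nb i :&: X'|.
  apply: eq_bigl => b; rewrite !inE.
  by case: (b =P l) => [->|]; rewrite ?(negbTE lB) ?andbF.
rewrite esym elm /=.
lia.
Qed.

Lemma count_edges : 0 < #|T| -> (forall x y, connect e x y) ->
  \sum_(b in Bs) #|Nb b| + 1 = #|T|.
Proof.
move=> Tn conn.
have := @count_X #|T|.-1 setT.
rewrite cardsT prednK // => /(_ erefl) H.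
have Hc : connectedX setT.
  move=> x y _ _; apply: (connect_sub _ (conn x y)) => a b eab.
  by apply: connect1; rewrite /eX !inE eab.
have := H Hc; rewrite (eq_bigl (fun b => b \in Bs)); last by move=> b; rewrite setIT.
by under eq_bigr => b _ do rewrite setIT.
Qed.
End Bip.
End Count.
End MP4.
Import MP4.
Module MP5.

Lemma crossing (V : finType) (r : rel V) (C : pred V) x y :
  connect r x y -> C x -> ~~ C y -> exists u v, [/\ r u v, C u & ~~ C v].
Proof.
move=> /connectP[p pp ->]; elim: p x pp => [|z p IH] x /=.
  by move=> _ Cx; rewrite Cx.
move=> /andP[rxz pp] Cx Cl.
case Cz: (C z); first by apply: IH pp _ Cl; rewrite Cz.
by exists x, z; rewrite Cz.
Qed.

Lemma card2_eq (V : finType) (A : {set V}) a c :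
  #|A| = 2 -> a \in A -> c \in A -> a != c -> A = [set a; c].
Proof.
move=> HA aA cA ac; apply/eqP; rewrite eq_sym eqEcard HA cards2 ac andbT.
by apply/subsetP => z; rewrite !inE => /orP[] /eqP ->.
Qed.

Section Main.
Variables (T : finType) (e : rel T).
Hypotheses (esym : symmetric e) (eirr : irreflexive e) (acyc : ~ has_cycle e)
  (conn : forall x y, connect e x y) (Tn : 0 < #|T|).
Hypothesis sn1 : forall v, v \in Bempty e -> ~ (forall w, e v w -> w \in Bempty e).
Hypothesis sn2 : forall u v, e u v -> ~ (u \in Bempty e /\ v \in Bempty e).

Local Notation B := (Bempty e).
Local Notation W := (Wempty e).

Lemma inW x : (x \in W) = (x \notin B).
Proof. by rewrite inE. Qed.

Lemma Bstable u v : whiteN e B u != [set v].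
Proof. exact: closure_not_single. Qed.

Lemma W_indep x y : x \in W -> y \in W -> ~~ e x y.
Proof.
move=> xW yW; apply/negP => exy; apply: acyc.
apply: (@deg2_cycle _ _ esym eirr W _ x y xW yW exy).
move=> a b aW bW eab.
have bin : b \in whiteN e B a by rewrite in_whiteN eab -inW.
have [z [zin zb]] := not_single_ex (Bstable a b) bin.
by exists z; move: zin; rewrite in_whiteN inW => /andP[-> ->].
Qed.

Lemma Hbip x y : e x y -> (x \in B) != (y \in B).
Proof.
move=> exy; case xB: (x \in B); case yB: (y \in B) => //.
  by case: (sn2 exy).
by have := W_indep (_ : x \in W) (_ : y \in W); rewrite !inW xB yB exy => /(_ erefl erefl).
Qed.

Lemma B_nb_W b w : b \in B -> e b w -> w \in W.
Proof. by move=> bB ebw; have := Hbip ebw; rewrite bB inW; case: (w \in B). Qed.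

Lemma W_nb_B w b : w \in W -> e w b -> b \in B.
Proof. by move=> wW ewb; have := Hbip ewb; rewrite -[w \in B]negbK -inW wW; case: (b \in B). Qed.

Lemma B_deg2 b : b \in B -> 1 < #|Nb e b|.
Proof.
move=> bB.
case: (boolP [exists w, e b w && (w \notin B)]); last first.
  move=> /existsPn H; exfalso; apply: (sn1 bB) => w ebw.
  by have := H w; rewrite ebw /= negbK.
move=> /existsP[w /andP[ebw wB]].
have win : w \in whiteN e B b by rewrite in_whiteN ebw wB.
have [z [zin zw]] := not_single_ex (Bstable b w) win.
apply/card_gt1P; exists w, z; split; rewrite ?inNb //.
  by move: zin; rewrite in_whiteN => /andP[].
by rewrite eq_sym.
Qed.

Lemma W_nonempty : exists w, w \in W.
Proof.
have [v _] : exists v, v \in [set: T] by apply/card_gt0P; rewrite cardsT.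
case vB: (v \in B); last by exists v; rewrite inW vB.
case: (boolP [exists w, e v w && (w \notin B)]).
  by move=> /existsP[w /andP[_ wB]]; exists w; rewrite inW.
move=> /existsPn H; exfalso; apply: (sn1 vB) => w evw.
by have := H w; rewrite evw /= negbK.
Qed.

Definition Pdeg := forall b, b \in B -> #|Nb e b| = 2.

Lemma count_B : \sum_(b in B) #|Nb e b| + 1 = #|T|.
Proof. have := @count_edges _ _ esym eirr acyc B Hbip Tn conn. by []. Qed.

Lemma card_BW : #|B| + #|W| = #|T|.
Proof. exact: cardsC. Qed.

Lemma Z1_P : Zminus e = 1 -> Pdeg.
Proof.
move=> HZ.
have [S [HS HSZ]] := Zminus_attained e.
have /cards1P [r Sr] : #|S| == 1 by rewrite -HSZ HZ.
move: HS; rewrite /skew_forcing_set Sr => /eqP Hf.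
have Hc := forcing_count Hf (A := W) (Bs := B).
have Hc' : #|W :\ r| <= #|B|.
  apply: Hc => u v vW euv; apply: W_nb_B vW _; by rewrite esym.
have HW : #|W| <= #|B| + 1.
  by have := cardsD1 r W; case: (r \in W) => /=; lia.
move=> b0 b0B; apply/eqP; apply/negP => Hne.
have H3 : 2 < #|Nb e b0| by have := B_deg2 b0B; move: Hne; lia.
have : \sum_(b in B) 2 < \sum_(b in B) #|Nb e b|.
  rewrite [X in X < _](bigD1 b0) // [X in _ < X](bigD1 b0) //=.
  rewrite -addSn; apply: leq_add => //; apply: leq_sum => b /andP[bB _].
  exact: B_deg2.
rewrite sum_nat_const.
have := count_B; have := card_BW; lia.
Qed.

Definition sdv x (xW : x \in W) : SD2_vertex e := exist _ x xW.

Lemma SD2E (a c : SD2_vertex e) :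
  SD2_rel e a c = (val a != val c) && [exists x, e (val a) x && e (val c) x].
Proof. by []. Qed.

Lemma tree_P : is_tree (SD2_rel e) -> Pdeg.
Proof.
move=> [_ _ Hac] b bB.
have H2 := B_deg2 bB.
apply/eqP; rewrite eqn_leq H2 andbT leqNgt; apply/negP => /card_gt2P.
move=> [x [y [z [[xN yN zN] [xy yz zx]]]]].
move: xN yN zN; rewrite !inNb => ebx eby ebz.
have xW := B_nb_W bB ebx; have yW := B_nb_W bB eby; have zW := B_nb_W bB ebz.
apply: (negP (Hac [:: sdv xW; sdv yW; sdv zW] _ _)) => //.
  by rewrite /= !inE -!val_eqE /= negb_or xy yz eq_sym zx.
rewrite /= !SD2E /= xy yz zx /=.
by rewrite andbT; apply/and3P; split; apply/existsP; exists b; rewrite ![e _ b]esym ?ebx ?eby ?ebz.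
Qed.


Lemma sdv_val (a : SD2_vertex e) (H : val a \in W) : sdv H = a.
Proof. by apply: val_inj. Qed.

Lemma SD2_conn (a c : SD2_vertex e) : connect (SD2_rel e) a c.
Proof.
have /connectP[p pp lastE] := conn (val a) (val c).
suff H : forall n p (a : SD2_vertex e) y, size p <= n -> path e (val a) p ->
    y = last (val a) p -> forall yW : y \in W, connect (SD2_rel e) a (sdv yW).
  by rewrite -(sdv_val (valP c)); apply: (H _ p a _ (leqnn _) pp lastE).
elim=> [|n IH] [|x [|z p']] a' y //= hs.
- by move=> _ -> yW; rewrite sdv_val.
- by move=> _ -> yW; rewrite sdv_val.
- by move=> /andP[ex _] -> xW; have := W_indep (valP a') xW; rewrite ex.
- move=> /and3P[ex exz pp'] Ey yW.
  have xB := W_nb_B (valP a') ex.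
  have zW := B_nb_W xB exz.
  have Hr : connect (SD2_rel e) (sdv zW) (sdv yW).
    by apply: (IH p' (sdv zW) y) => //; move: hs; lia.
  apply: connect_trans Hr.
  case: (eqVneq (val a') z) => [Eaz|naz].
    by rewrite -(sdv_val (valP a')); move: (valP a'); rewrite Eaz => h;
       rewrite (bool_irrelevance h zW).
  apply: connect1; rewrite SD2E /= naz /=.
  by apply/existsP; exists x; rewrite ex esym.
Qed.

Lemma BW_neq x y : x \in B -> y \in W -> x != y.
Proof. by move=> xB; rewrite inW; apply: contraNneq => <-. Qed.

Lemma P_tree : Pdeg -> is_tree (SD2_rel e).
Proof.
move=> HP; split.
- have [w wW] := W_nonempty; apply/card_gt0P; by exists (sdv wW).
- exact: SD2_conn.
move=> c Uc Sc; apply/negP => Cc; apply: acyc.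
case: c Uc Sc Cc => [|u [|v [|s0 s]]] //= Uc _.
move=> /and3P[Huv Hvs0 Hp'].
pose Q := fun a : SD2_vertex e => a \notin [:: u; v].
move: Uc; rewrite !inE !negb_or => /and4P[/and3P[uv us0 us] /andP[vs0 vs] s0s Us].
have Qs0 : Q s0 by rewrite /Q !inE negb_or eq_sym us0 eq_sym vs0.
have Qs : all Q s.
  apply/allP => z zs; rewrite /Q !inE negb_or.
  apply/andP; split; [apply: (contraNneq _ us) | apply: (contraNneq _ vs)];
    by move=> <-.
have HR := path_avoid Qs0 Qs Hp'.
move: Huv; rewrite SD2E => /andP[nuv /existsP[x /andP[eux evx]]].
have xB := W_nb_B (valP u) eux.
have Nx : Nb e x = [set val u; val v].
  by apply: card2_eq; rewrite ?HP // inNb esym.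
pose e' := avoid e (val u) x.
have notlist : forall y, y \in B -> y != x -> (y \in [:: val u; x]) = false.
  move=> y yB yx; rewrite !inE (negbTE yx) orbF.
  by apply/negbTE; apply: BW_neq (valP u).
have step : forall a b, SD2_rel e a b && (Q a || Q b) ->
    connect e' (val a) (val b).
  move=> a b /andP[]; rewrite SD2E => /andP[_ /existsP[y /andP[eay eby]]] Qab.
  have yB := W_nb_B (valP a) eay.
  have yx : y != x.
    apply: contraTneq Qab => yx.
    have : val a \in Nb e x by rewrite inNb esym -yx.
    have : val b \in Nb e x by rewrite inNb esym -yx.
    by rewrite Nx /Q !inE !val_eqE => -> ->.
  apply: (@connect_trans _ _ y); apply: connect1;
    rewrite /e' /avoid (notlist y yB yx) ?andbF /= ?andbT //.
  by rewrite esym.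
have lift : forall p a, path (fun a b => SD2_rel e a b && (Q a || Q b)) a p ->
    connect e' (val a) (val (last a p)).
  elim=> [|z p IH] a //= /andP[Raz pz].
  exact: connect_trans (step _ _ Raz) (IH _ pz).
have H1 := lift _ _ HR; rewrite last_rcons in H1.
have H2 : connect e' (val v) (val s0) by apply: step; rewrite Hvs0 Qs0 orbT.
have H3 : connect e' x (val v).
  apply: connect1; rewrite /e' /avoid esym evx /= !inE eqxx orbT /=.
  by rewrite eq_sym (negbTE nuv) eq_sym (negbTE (BW_neq xB (valP v))).
apply: (@cycle_of_avoid _ e (val u) x).
- by rewrite eq_sym; apply: BW_neq (valP u).
- exact: eux.
- exact: connect_trans H3 (connect_trans H2 H1).
Qed.

Lemma P_Z1 : Pdeg -> Zminus e = 1.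
Proof.
move=> HP.
have [w wW] := W_nonempty.
have Hf : skew_forcing_set e [set w].
  rewrite /skew_forcing_set; set C := skew_closure e [set w].
  have BC : B \subset C := closure_mono e (sub0set [set w]).
  have wC : w \in C := subsetP (closure_ext e [set w]) w (set11 w).
  rewrite eqEsubset subsetT /=; apply/subsetP => y _.
  apply/negPn/negP => yC.
  have yW : y \in W by rewrite inW; apply: contra yC; apply: (subsetP BC).
  have [a [c [Hac aC cC]]] :=
    crossing (C := fun a : SD2_vertex e => val a \in C) (SD2_conn (sdv wW) (sdv yW)) wC yC.
  move: Hac; rewrite SD2E => /andP[nac /existsP[x /andP[eax ecx]]].
  have xB := W_nb_B (valP a) eax.
  have Nx : Nb e x = [set val a; val c].
    by apply: card2_eq; rewrite ?HP // inNb esym.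
  have Hwh : whiteN e C x == [set val c].
    apply/eqP/setP => z; rewrite in_whiteN -(@inNb _ e x z) Nx !inE.
    case: (z =P val a) => [->|za]; first by rewrite aC andbF; symmetry; apply/negbTE.
    by case: (z =P val c) => [->|] //=; rewrite (negbTE cC).
  have := forced_in Hwh; rewrite closure_stable => cin.
  by rewrite cin in cC.
apply/eqP; rewrite eqn_leq; apply/andP; split.
  by have := Zminus_le Hf; rewrite cards1.
rewrite /Zminus; apply: (big_ind (fun m => 0 < m)) => //.
  by move=> a b; rewrite leq_min => -> ->.
move=> S HS; rewrite card_gt0; apply: contraTneq HS => ->.
apply/negP => /eqP HB.
by move: wW; rewrite inW /Bempty HB inE.
Qed.

Definition Sv v : {set SD2_vertex e} := [set a | e v (val a)].
Definition fmap (w0 : SD2_vertex e) (v : T) : subdiv_vertex (SD2_rel e) :=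
  match (insub v : option (SD2_vertex e)) with
  | Some a => inl a
  | None => match (insub (Sv v) : option (edge_type (SD2_rel e))) with
            | Some s => inr s | None => inl w0 end end.

Lemma common_uniq x y p q : p != q -> e x p -> e x q -> e y p -> e y q -> x = y.
Proof.
move=> pq exp exq eyp eyq; apply/eqP/negPn/negP => xy; apply: acyc.
exists [:: p; x; q; y]; split => //=.
- rewrite !inE !negb_or pq xy eq_sym (edge_neq eirr exp) (edge_neq eirr exq).
  by rewrite eq_sym (edge_neq eirr eyp) eq_sym (edge_neq eirr eyq).
- by rewrite esym exp exq esym eyq eyp.
Qed.

Section Iso.
Hypothesis HP : Pdeg.

Lemma is_edge_Sv v : v \in B -> is_edge (SD2_rel e) (Sv v).
Proof.
move=> vB; have /cards2P [p [q [pq Nv]]] : #|Nb e v| == 2 by rewrite HP.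
have pW : p \in W by apply: (B_nb_W vB); rewrite -(@inNb _ e) Nv set21.
have qW : q \in W by apply: (B_nb_W vB); rewrite -(@inNb _ e) Nv set22.
apply/existsP; exists (sdv pW); apply/existsP; exists (sdv qW).
rewrite SD2E /= pq /=; apply/andP; split.
  apply/existsP; exists v.
  by rewrite (esym p v) (esym q v) -(@inNb _ e v p) -(@inNb _ e v q) Nv set21 set22.
apply/eqP/setP => a; rewrite !inE -!val_eqE /= -(@inNb _ e v) Nv !inE.
by [].
Qed.

Variable w0 : SD2_vertex e.
Local Notation f := (fmap w0).

Lemma fW v (vW : v \in W) : f v = inl (sdv vW).
Proof. by rewrite /fmap insubT. Qed.

Lemma fB v (vB : v \in B) : f v = inr (Sub (Sv v) (is_edge_Sv vB)).
Proof. by rewrite /fmap insubF ?inW ?vB // (insubT _ (is_edge_Sv vB)). Qed.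

Lemma f_inj : injective f.
Proof.
move=> x y; case: (boolP (x \in B)) => xB; case: (boolP (y \in B)) => yB.
- rewrite (fB xB) (fB yB) => -[] HS.
  have /cards2P [p [q [pq Nx]]] : #|Nb e x| == 2 by rewrite HP.
  have exp : e x p by rewrite -(@inNb _ e) Nx set21.
  have exq : e x q by rewrite -(@inNb _ e) Nx set22.
  have pW := B_nb_W xB exp; have qW := B_nb_W xB exq.
  have : sdv pW \in Sv x by rewrite inE.
  have : sdv qW \in Sv x by rewrite inE.
  rewrite HS !inE /= => eyq eyp.
  exact: common_uniq pq exp exq eyp eyq.
- have yW : y \in W by rewrite inW.
  by rewrite (fB xB) (fW yW).
- have xW : x \in W by rewrite inW.
  by rewrite (fB yB) (fW xW).
- have xW : x \in W by rewrite inW.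
  have yW : y \in W by rewrite inW.
  by rewrite (fW xW) (fW yW) => -[].
Qed.

Lemma f_surj z : exists v, f v = z.
Proof.
case: z => [a|s].
  by exists (val a); rewrite (fW (valP a)) sdv_val.
have := valP s => /existsP[a /existsP[c /andP[Hac /eqP Hs]]].
move: Hac; rewrite SD2E => /andP[nac /existsP[x /andP[eax ecx]]].
have xB := W_nb_B (valP a) eax.
have Nx : Nb e x = [set val a; val c].
  by apply: card2_eq; rewrite ?HP // inNb esym.
exists x; rewrite (fB xB); congr inr; apply: val_inj => /=.
rewrite Hs; apply/setP => d; rewrite inE -(@inNb _ e x) Nx !inE -!val_eqE.
by [].
Qed.

Lemma f_edge x y : subdiv_rel (SD2_rel e) (f x) (f y) = e x y.
Proof.
case: (boolP (x \in B)) => xB; case: (boolP (y \in B)) => yB.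
- rewrite (fB xB) (fB yB) /=; symmetry; apply/negP => exy.
  by case: (sn2 exy).
- have yW : y \in W by rewrite inW.
  by rewrite (fB xB) (fW yW) /= inE.
- have xW : x \in W by rewrite inW.
  by rewrite (fW xW) (fB yB) /= inE esym.
- have xW : x \in W by rewrite inW.
  have yW : y \in W by rewrite inW.
  by rewrite (fW xW) (fW yW) /=; symmetry; apply/negbTE/W_indep.
Qed.

End Iso.

Lemma P_iso : Pdeg -> is_subdivision_of e (SD2_rel e).
Proof.
move=> HP; have [w wW] := W_nonempty.
exists (fmap (sdv wW)); split; last exact: f_edge.
exists (fun z => odflt w [pick v | fmap (sdv wW) v == z]).
  move=> v; case: pickP => [v' /eqP /(f_inj HP) //|/(_ v)].
  by rewrite eqxx.
move=> z; have [v fv] := f_surj HP (sdv wW) z.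
case: pickP => [v' /eqP //|/(_ v)].
by rewrite fv eqxx.
Qed.

Definition isl (A C : Type) (z : A + C) := if z is inl _ then true else false.

Lemma subdiv_P (U : finType) (g : rel U) : irreflexive g ->
  is_subdivision_of e g -> Pdeg.
Proof.
move=> girr [f [[finv fK finvK] fe]].
have deg2 : forall z s, f z = inr s -> #|Nb e z| = 2.
  move=> z s fz.
  have := valP s => /existsP[x /existsP[y /andP[gxy /eqP Hs]]].
  have xy : x != y := edge_neq girr gxy.
  have -> : Nb e z = [set finv (inl x); finv (inl y)].
    apply/setP => w; rewrite inNb -fe fz !inE.
    rewrite -!(can_eq fK) !finvK; case: (f w) => [u|t] //=.
    by rewrite Hs !inE.
  rewrite cards2 (can_eq finvK).
  by have -> : (inl x != inl y :> subdiv_vertex g) by apply: contra xy => /eqP [] ->.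
have bip_O : forall x y, e x y -> isl (f x) != isl (f y).
  by move=> x y; rewrite -fe; case: (f x) => [a|s]; case: (f y) => [b|t].
have par : forall x y, connect e x y ->
    ((x \in B) == isl (f x)) = ((y \in B) == isl (f y)).
  move=> x y /connectP[p pp ->]; elim: p x pp => [|z p IH] x //= /andP[exz pp].
  rewrite -(IH z pp); have h1 := Hbip exz; have h2 := bip_O _ _ exz.
  move: h1 h2; case: (x \in B); case: (z \in B); case: (isl (f x)); by case: (isl (f z)).
have [x0 _] : exists v, v \in [set: T] by apply/card_gt0P; rewrite cardsT.
case: (boolP ((x0 \in B) == isl (f x0))) => H0; last first.
  move=> b bB; have := par x0 b (conn x0 b); rewrite (negbTE H0) bB.
  case fb: (f b) => [u|t] //= _; exact: deg2 fb.
exfalso.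
have Wdeg : forall w, w \in W -> #|Nb e w| = 2.
  move=> w wW; have := par x0 w (conn x0 w); rewrite H0; move: wW; rewrite inW.
  case: (w \in B) => //= _; case fw: (f w) => [u|t] //= _; exact: deg2 fw.
have HbipW : forall x y, e x y -> (x \in W) != (y \in W).
  by move=> x y exy; rewrite !inW; have := Hbip exy; case: (x \in B); case: (y \in B).
have cW := @count_edges _ _ esym eirr acyc W HbipW Tn conn.
rewrite (eq_bigr (fun _ => 2)) ?sum_nat_const in cW; last by move=> w; apply: Wdeg.
have cB := count_B.
have : \sum_(b in B) 2 <= \sum_(b in B) #|Nb e b| by apply: leq_sum => b; apply: B_deg2.
rewrite sum_nat_const; have := card_BW; lia.
Qed.

End Main.
End MP5.
Import MP5.
Unset Implicit Arguments.

Lemma SD2_irr (T : finType) (e : rel T) : irreflexive (SD2_rel e).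
Proof. by move=> a; rewrite SD2E eqxx. Qed.

Lemma SD2_sym (T : finType) (e : rel T) : symmetric (SD2_rel e).
Proof.
move=> a b; rewrite !SD2E eq_sym; congr andb.
by apply/existsP/existsP => -[x /andP[h1 h2]]; exists x; rewrite h1 h2.
Qed.

Theorem theorem6p9 (T : finType) (e : rel T) :
  simple_graph e -> is_tree e -> skew_nontrivial e ->
  [<-> Zminus e = 1;
       is_tree (SD2_rel e);
       exists (U : finType) (f : rel U),
         [/\ simple_graph f, is_tree f & is_subdivision_of e f];
       is_subdivision_of e (SD2_rel e)].
Proof.
move=> [esym eirr] [Tn conn acyc'] [sn1 sn2].
have acyc : ~ has_cycle e by move=> [c [U S C]]; move: (acyc' c U S); rewrite C.
tfae.
- move=> H1; apply: P_tree => //; exact: Z1_P.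
- move=> H2; exists (SD2_vertex e), (SD2_rel e); split => //.
    by split; [exact: SD2_sym | exact: SD2_irr].
  by apply: P_iso => //; exact: tree_P.
- move=> [U [f [[_ firr] _ Hs]]].
  by apply: P_iso => //; exact: (subdiv_P _ _ _ _ _ _ _ firr Hs).
- move=> H4; apply: P_Z1 => //.
  exact: (subdiv_P _ _ _ _ _ _ _ (@SD2_irr T e) H4).
Qed.
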